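(* Let $n,k,b,t$ be positive integers with $k\le n$, let $V=\{1,\dots,n\}$, and let $Q_1,\dots,Q_t$ be arbitrary subsets of $V\times\{1,\dots,b\}$; for $1\le i\le t$ and $1\le\beta\le b$ put $Q_{i,\beta}=\{x\in V:(x,\beta)\in Q_i\}$. Let $\mathcal F_k^n$ be the family of all $k$-element subsets of $V$. Suppose that $k/2$ is a prime power and that $t\le \frac{k}{2b}\lg\frac{n}{k}-\frac{k+1}{b}$, where $\lg$ is the binary logarithm. Then there exist two sets $A,B\in\mathcal F_k^n$ such that (a) $|A\cap B|=k/2$, and (b) for every $1\le\beta\le b$ and $1\le i\le t$, $|A\cap Q_{i,\beta}|$ is odd if and only if $|B\cap Q_{i,\beta}|$ is odd.
   Context: Each $Q_i$ (a ''query'') is interpreted as the set of pairs (station $x$, channel $\beta$) such that station $x$ transmits on channel $\beta$ at time step $i$; a deterministic oblivious algorithm is represented by such a sequence $Q_1,\dots,Q_t$. *)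

(* Defs.v *)
From mathcomp Require Import all_boot.
From Stdlib Require Import Reals.
Set Implicit Arguments. Unset Strict Implicit. Unset Printing Implicit Defensive.

Definition lg (x : R) : R := (ln x / ln 2)%R.

Definition prime_power (m : nat) : Prop :=
  exists p e : nat, prime p /\ (0 < e)%N /\ m = (p ^ e)%N.

Definition Qslice (n b : nat) (Qi : {set 'I_n * 'I_b}) (beta : 'I_b) : {set 'I_n} :=
  [set x | (x, beta) \in Qi].

(* Main.v *)
Require Import Defs.
From Stdlib Require Import Reals Lra.
From mathcomp Require Import all_boot all_algebra.
From mathcomp Require Import zify.
Delimit Scope R_scope with R.
Set Implicit Arguments. Unset Strict Implicit. Unset Printing Implicit Defensive.

Section FW.
Import GRing.Theory.
Local Open Scope ring_scope.
Variables (p e : nat).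
Hypothesis p_pr : prime p.
Hypothesis e_gt0 : (0 < e)%nat.
Local Notation q := (p ^ e)%nat.

Lemma dvd_binq j : (0 < j < q)%nat -> (p %| 'C(q, j))%nat.
Proof.
case/andP=> j0 jq; apply/negPn/negP => npd.
have co : coprime q 'C(q, j) by apply: coprimeXl; rewrite prime_coprime.
have h := mul_bin_diag q j.-1.
rewrite prednK // in h.
have : (q %| j * 'C(q, j))%nat by rewrite -h dvdn_mulr.
by rewrite Gauss_dvdl // => /(dvdn_leq j0); rewrite leqNgt jq.
Qed.

Lemma natF0 m : (p %| m)%nat -> (m%:R : 'F_p) = 0.
Proof. by move=> h; apply/eqP; rewrite -(dvdn_pcharf (pchar_Fp p_pr)). Qed.

Lemma binq m j : (j < q)%nat -> ('C(m + q, j))%:R = ('C(m, j))%:R :> 'F_p.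
Proof.
elim: m j => [|m IH] j jq.
  case: j jq => [|j] jq; first by rewrite !bin0.
  by rewrite add0n natF0 ?bin0n // dvd_binq.
case: j jq => [|j] jq; first by rewrite !bin0.
rewrite addSn !binS !natrD IH // IH //.
by apply: ltnW.
Qed.

Lemma binq_mod m j : (j < q)%nat -> ('C(m, j))%:R = ('C(m %% q, j))%:R :> 'F_p.
Proof.
move=> jq; rewrite {1}(divn_eq m q).
elim: (m %/ q)%nat => [|a IH]; first by rewrite mul0n add0n.
by rewrite mulSn -addnA addnC binq.
Qed.

Lemma hq m : \sum_(j < q) (-1) ^+ j * ('C(m, j))%:R = (q %| m)%:R :> 'F_p.
Proof.
have q0 : (0 < q)%nat by rewrite expn_gt0 prime_gt0.
under eq_bigr => j _ do rewrite (binq_mod m (ltn_ord j)).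
have rq : (m %% q < q)%nat by rewrite ltn_mod.
rewrite /dvdn; move: rq; set r := (m %% q)%nat => rq.
rewrite -(big_mkord xpredT (fun j => (-1) ^+ j * ('C(r, j))%:R :> 'F_p)).
rewrite (big_cat_nat _ (n := r.+1)) //=.
rewrite [X in _ + X]big1_seq ?addr0; last first.
  move=> i /andP[_]; rewrite mem_index_iota => /andP[ri _].
  by rewrite bin_small ?mulr0.
have := exprDn (1 : 'F_p) (-1) r.
rewrite subrr expr0n big_mkord => ->.
apply: eq_bigr => i _; rewrite expr1n mul1r mulr_natr.
done.
Qed.


Lemma sum_sub (T : finType) (C : {set T}) :
  \sum_(S : {set T} | (S \subset C) && (#|S| < q)%nat) (-1) ^+ #|S|
  = \sum_(j < q) (-1) ^+ j * ('C(#|C|, j))%:R :> 'F_p.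
Proof.
have inner (S : {set T}) : (#|S| < q)%nat -> (-1) ^+ #|S| = \sum_(j < q | #|S| == j) (-1) ^+ j :> 'F_p.
  move=> Sq; rewrite (big_pred1 (Ordinal Sq)) //.
under eq_bigr => S /andP[_ Sq] do rewrite (inner S Sq).
transitivity (\sum_(S : {set T} | S \subset C) \sum_(j < q | #|S| == j) ((-1) ^+ j : 'F_p)).
  rewrite big_mkcond [RHS]big_mkcond; apply: eq_bigr => S _.
  case: (S \subset C) => //=.
  case: ltnP => // qS; rewrite big_pred0 // => j; apply/negbTE.
  by apply/eqP=> Sj; move: (ltn_ord j); rewrite -Sj ltnNge qS.
under eq_bigr => S _ do rewrite big_mkcond.
rewrite exchange_big /=; apply: eq_bigr => j _.
rewrite -big_mkcondr sumr_const -cards_draws mulr_natr.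
congr (_ *+ _); apply: eq_card => S; rewrite !inE. done.
Qed.


Lemma FW (n : nat) (G : {set {set 'I_n}}) :
  (forall A, A \in G -> (q %| #|A|)%nat) ->
  (forall A B, A \in G -> B \in G -> A != B -> ~~ (q %| #|A :&: B|)%nat) ->
  (#|G| <= #|[set S : {set 'I_n} | (#|S| < q)%nat]|)%nat.
Proof.
move=> HA HAB.
set P := [set S : {set 'I_n} | (#|S| < q)%nat].
pose SS (j : 'I_#|P|) : {set 'I_n} := enum_val j.
pose AA (i : 'I_#|G|) : {set 'I_n} := enum_val i.
pose U : 'M['F_p]_(#|G|, #|P|) := \matrix_(i, j)
  (if SS j \subset AA i then (-1) ^+ #|SS j| else 0).
pose W : 'M['F_p]_(#|P|, #|G|) := \matrix_(j, i)
  (if SS j \subset AA i then 1 else 0).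
have UW : U *m W = 1%:M.
  apply/matrixP => i i'; rewrite !mxE.
  rewrite (eq_bigr (fun j => if SS j \subset AA i :&: AA i'
                  then (-1) ^+ #|SS j| else 0)); last first.
    move=> j _; rewrite !mxE subsetI.
    by case: (_ \subset AA i); case: (_ \subset AA i') => /=;
      rewrite ?mulr1 ?mulr0 ?mul0r.
  transitivity (\sum_(S in P) (if S \subset AA i :&: AA i' then (-1) ^+ #|S| else 0) : 'F_p).
    by rewrite [RHS]big_enum_val.
  rewrite -big_mkcondr.
  under eq_bigl => S do rewrite inE andbC.
  rewrite sum_sub hq.
  have [<-|neq] := eqVneq i i'.
    by rewrite setIid HA ?enum_valP.
  rewrite (negbTE (HAB _ _ (enum_valP i) (enum_valP i') _)) //.
  by apply: contra neq => /eqP/enum_val_inj ->.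
have := mxrankM_maxl U W; rewrite UW mxrank1 => h.
exact: leq_trans h (rank_leq_col U).
Qed.

End FW.

Lemma expn_mono m n e : m <= n -> m ^ e <= n ^ e.
Proof. by move=> h; elim: e => // e IH; rewrite !expnS leq_mul. Qed.

Lemma ffact_le_pow N m : N ^_ m <= N ^ m.
Proof.
elim: m N => [|m IH] N; first by [].
rewrite ffactnS expnS leq_mul //.
apply: leq_trans (IH _) _; apply: expn_mono; exact: leq_pred.
Qed.

Lemma fact_bin_le N m : m`! * 'C(N, m) <= N ^ m.
Proof. by rewrite mulnC bin_ffact ffact_le_pow. Qed.

Lemma sum_bin_le N r : 2 * r <= N ->
  r`! * \sum_(i < r.+1) 'C(N, i) <= 2 * N ^ r.
Proof.
elim: r => [|r IH] h; first by rewrite big_ord_recr big_ord0 /= bin0.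
rewrite big_ord_recr /= factS -mulnA mulnDr mulnDr [r.+1 * (r`! * 'C(N, r.+1))]mulnA.
have hr : 2 * r <= N by lia.
have h1 := IH hr.
have h2 := fact_bin_le N r.+1.
rewrite factS in h2.
apply: leq_trans (leq_add (leq_mul (leqnn r.+1) h1) h2) _.
rewrite expnS.
have : r.+1 * (2 * N ^ r) <= N * N ^ r.
  rewrite mulnA leq_mul2r; apply/orP; right; lia.
lia.
Qed.

Lemma ffact_ge M j : (M - j) ^ j <= M ^_ j.
Proof.
elim: j M => [|j IH] M; first by [].
rewrite ffactnS expnS.
apply: leq_mul; first by apply: leq_subr.
apply: leq_trans (IH M.-1).
apply: expn_mono; lia.
Qed.

Lemma fact_split_le a m : (a + m)`! <= a`! * (a + m) ^ m.
Proof.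
elim: m => [|m IH]; first by rewrite addn0 muln1.
rewrite addnS factS expnS mulnCA leq_mul //.
apply: leq_trans IH _; rewrite leq_mul2l; apply/orP; right.
by apply: expn_mono.
Qed.

Lemma key4 N q : 0 < q -> 8 * q <= N -> N ^ (2 * q - 1) < 4 ^ q * (N - 2 * q) ^ (2 * q - 1).
Proof.
move=> q0 h.
set m := 2 * q - 1.
have N0 : 0 < N ^ m by rewrite expn_gt0; apply/orP; left; lia.
have e1 : 3 ^ m * N ^ m <= 4 ^ m * (N - 2 * q) ^ m.
  rewrite -!expnMn; apply: expn_mono; lia.
have e2 : 4 ^ m = 4 ^ (q - 1) * 4 ^ q by rewrite -expnD; congr (_ ^ _); lia.
have e3 : 4 ^ (q - 1) < 3 ^ m.
  have -> : m = (q - 1) + (q - 1) + 1 by lia.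
  rewrite !expnD expn1 -expnMn.
  apply: (@leq_ltn_trans (9 ^ (q - 1))); first by apply: expn_mono.
  by rewrite ltn_Pmulr // expn_gt0.
rewrite -(ltn_pmul2l (expn_gt0 4 (q - 1))).
apply: (@leq_trans (3 ^ m * N ^ m)).
  by rewrite ltn_pmul2r.
by apply: leq_trans e1 _; rewrite e2 mulnA.
Qed.

Lemma numeric N q D : 0 < q -> 8 * q <= N -> 2 ^ (D + 2 * q + 1) * (2 * q) ^ q <= N ^ q ->
  2 ^ D * \sum_(i < q) 'C(N, i) < 'C(N.-1, 2 * q - 1).
Proof.
case: q => [//|r] _ hN H.
set q := r.+1 in hN H *.
set S := \sum_(i < q) 'C(N, i).
set C := 'C(N.-1, 2 * q - 1).
set m := 2 * q - 1.
have hS : r`! * S <= 2 * N ^ r by apply: sum_bin_le; lia.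
have fs : m`! <= r`! * (2 * q) ^ q.
  have e : m = r + q by rewrite /m /q; lia.
  rewrite e; apply: leq_trans (fact_split_le r q) _.
  rewrite leq_mul2l; apply/orP; right; apply: expn_mono; lia.
have hC : (N - 2 * q) ^ m <= C * m`!.
  rewrite bin_ffact; apply: leq_trans (ffact_ge N.-1 m).
  apply: expn_mono; rewrite /m; lia.
have k4 := @key4 N q (ltn0Sn r) hN.
have e4 : 2 ^ (2 * q + 1) = 2 * 4 ^ q by rewrite expnD expn1 mulnC expnM.
have eNm : N ^ q * N ^ r = N ^ m by rewrite -expnD /m /q; congr (_ ^ _); lia.
have K0 : 0 < r`! * (2 ^ (2 * q + 1) * (2 * q) ^ q).
  by rewrite !muln_gt0 fact_gt0 !expn_gt0.
rewrite -(ltn_pmul2r K0).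
have L1 : 2 ^ D * S * (r`! * (2 ^ (2 * q + 1) * (2 * q) ^ q))
        = (2 ^ (D + 2 * q + 1) * (2 * q) ^ q) * (r`! * S).
  rewrite -addnA [2 ^ (D + _)]expnD.
  clear; move: (2 ^ D) (2 ^ _) ((2 * q) ^ q) (r`!) S => a b c d s; lia.
rewrite L1.
apply: (@leq_ltn_trans (N ^ q * (2 * N ^ r))); first exact: leq_mul.
rewrite mulnCA eNm.
apply: (@leq_trans (2 * (4 ^ q * (N - 2 * q) ^ m))).
  by rewrite ltn_pmul2l.
rewrite e4.
apply: (@leq_trans (C * m`! * (2 * 4 ^ q))).
  move: hC; clear; move: (C * m`!) (4 ^ q) ((N - 2 * q) ^ m) => y a x h; nia.
idtac.
move: fs; clear; move: (m`!) (r`!) ((2 * q) ^ q) C (4 ^ q) => x f g c a h.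
have : c * x * (2 * a) <= c * (f * g) * (2 * a) by rewrite leq_mul2r leq_mul2l h !orbT.
move=> hh; apply: leq_trans hh _; rewrite eq_leq //; lia.
Qed.

Lemma expn_pow m n : expn m n = Nat.pow m n.
Proof. by elim: n => // n IH; rewrite expnS IH. Qed.

Lemma real_part (n k b t : nat) : (0 < n)%N -> (0 < k)%N -> (0 < b)%N ->
  k = (k./2 * 2)%N ->
  (INR t <= INR k / (2 * INR b) * lg (INR n / INR k) - (INR k + 1) / INR b)%R ->
  (2 ^ (t * b + k + 1) * k ^ k./2 <= n ^ k./2)%N.
Proof.
move=> /ltP n0 /ltP k0 /ltP b0 Ek H.
set q := k./2 in Ek *.
have Hb : (0 < INR b)%R by apply: lt_0_INR.
have Hk : (0 < INR k)%R by apply: lt_0_INR.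
have Hn : (0 < INR n)%R by apply: lt_0_INR.
have Hl2 : (0 < ln 2)%R by rewrite -ln_1; apply: ln_increasing; lra.
have Hkq : INR k = (2 * INR q)%R.
  by rewrite {1}Ek mult_INR /=; lra.
set L := lg (INR n / INR k) in H.
have H1 : (INR t * INR b <= INR q * L - (INR k + 1))%R.
  have -> : (INR q * L - (INR k + 1) =
     (INR k / (2 * INR b) * L - (INR k + 1) / INR b) * INR b)%R.
    rewrite Hkq; field; lra.
  by apply: Rmult_le_compat_r; lra.
set D := (t * b + k + 1)%N.
have H2 : (INR D <= INR q * L)%R.
  rewrite /D !plus_INR mult_INR /=; lra.
have H3 : (ln (2 ^ D) <= ln ((INR n / INR k) ^ q))%R.
  rewrite !ln_pow; [|apply: Rdiv_lt_0_compat => //|lra].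
  rewrite /L /lg in H2.
  have := Rmult_le_compat_r (ln 2) _ _ (Rlt_le _ _ Hl2) H2.
  have -> : (INR q * (ln (INR n / INR k) / ln 2) * ln 2 = INR q * ln (INR n / INR k))%R.
    by field; lra.
  by lra.
have H4 : (2 ^ D <= (INR n / INR k) ^ q)%R.
  apply: Rnot_lt_le => C.
  have := ln_increasing _ _ (pow_lt _ q (Rdiv_lt_0_compat _ _ Hn Hk)) C.
  lra.
have H5 : (2 ^ D * INR k ^ q <= INR n ^ q)%R.
  have -> : (INR n ^ q = (INR n / INR k) ^ q * INR k ^ q)%R.
    rewrite -Rpow_mult_distr; f_equal; field; lra.
  apply: Rmult_le_compat_r => //; apply: pow_le; lra.
apply/leP; apply: INR_le.
rewrite mult_INR !expn_pow !pow_INR /=.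
by [].
Qed.


Lemma card_small n q : #|[set S : {set 'I_n} | (#|S| < q)%N]| = \sum_(i < q) 'C(n, i).
Proof.
rewrite -sum1_card.
transitivity (\sum_(S : {set 'I_n}) \sum_(i < q | #|S| == i) 1)%N.
  rewrite big_mkcond; apply: eq_bigr => S _; rewrite inE.
  case: ltnP => h.
    by rewrite (big_pred1 (Ordinal h)) // => j; rewrite /= -val_eqE /= eq_sym.
  rewrite big_pred0 // => j; apply/negbTE.
  by apply/eqP=> Sj; move: (ltn_ord j); rewrite -Sj ltnNge h.
under eq_bigr => S _ do rewrite big_mkcond.
rewrite exchange_big /=; apply: eq_bigr => i _.
rewrite -big_mkcondr sum1_card -[in RHS](card_ord n) -card_draws.
by apply: eq_card => S; rewrite !inE.
Qed.

Theorem lemma2 (n k b t : nat) (Q : 'I_t -> {set 'I_n * 'I_b}) :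
  (0 < n)%N -> (0 < k)%N -> (0 < b)%N -> (0 < t)%N -> (k <= n)%N ->
  ~~ odd k -> prime_power k./2 ->
  (INR t <= INR k / (2 * INR b) * lg (INR n / INR k) - (INR k + 1) / INR b)%R ->
  exists A B : {set 'I_n},
    #|A| = k /\ #|B| = k /\ #|A :&: B| = k./2 /\
    forall (i : 'I_t) (beta : 'I_b),
      odd #|A :&: Qslice (Q i) beta| = odd #|B :&: Qslice (Q i) beta|.
Proof.
move=> n0 k0 b0 t0 kn ek [p [e [pp [e0 qE]]]] Hreal.
rewrite -expn_pow in qE.
have Ek : k = (k./2 * 2)%N by rewrite muln2 halfK (negbTE ek) subn0.
have Hnat := real_part n0 k0 b0 Ek Hreal.
set q := k./2 in qE Ek Hnat *.
have q0 : (0 < q)%N by rewrite qE expn_gt0 prime_gt0.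
have Ek2 : k = (2 * q)%N by rewrite Ek mulnC.
rewrite Ek2 in Hnat.
have tb0 : (0 < t * b)%N by rewrite muln_gt0 t0 b0.
have hN : (8 * q <= n)%N.
  rewrite leqNgt; apply/negP => h.
  have h1 : (n ^ q <= (8 * q) ^ q)%N by apply: expn_mono; lia.
  have h2 : (2 ^ (2 * q + 2) * (2 * q) ^ q <= 2 ^ (t * b + 2 * q + 1) * (2 * q) ^ q)%N.
    rewrite leq_mul2r; apply/orP; right; rewrite leq_exp2l //; lia.
  have h3 : ((8 * q) ^ q < 2 ^ (2 * q + 2) * (2 * q) ^ q)%N.
    have -> : (8 * q = 4 * (2 * q))%N by lia.
    rewrite expnMn expnD expnM.
    have a0 : (0 < (2 * q) ^ q)%N by rewrite expn_gt0 muln_gt0 q0.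
    have f0 : (0 < (2 ^ 2) ^ q)%N by rewrite expn_gt0.
    move: a0 f0; move: ((2 * q) ^ q)%N ((2 ^ 2) ^ q)%N => a f a0 f0.
    rewrite /= -/(2 ^ 2); nia.
  have := leq_trans (leq_trans h2 Hnat) h1; rewrite leqNgt h3.
  by [].
have Hnum := @numeric n q (t * b) q0 hN Hnat.
pose x0 : 'I_n := Ordinal n0.
pose Fam := [set A : {set 'I_n} | (x0 \in A) && (#|A| == k)].
have cardFam : ('C(n.-1, 2 * q - 1) <= #|Fam|)%N.
  pose Dm := [set S : {set 'I_n} | S \subset [set~ x0] & #|S| == k.-1].
  have cD : #|Dm| = 'C(n.-1, 2 * q - 1).
    by rewrite cards_draws cardsC1 card_ord Ek2 subn1.
  rewrite -cD -(@card_in_imset _ _ (fun S => x0 |: S)); last first.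
    move=> S1 S2; rewrite !inE => /andP[s1 _] /andP[s2 _] e12.
    have n1 : x0 \notin S1 by apply/negP => /(subsetP s1); rewrite !inE eqxx.
    have n2 : x0 \notin S2 by apply/negP => /(subsetP s2); rewrite !inE eqxx.
    by rewrite -(setU1K n1) -(setU1K n2) e12.
  apply: subset_leq_card; apply/subsetP => A /imsetP[S]; rewrite !inE.
  move=> /andP[s1 /eqP cS] ->; rewrite setU11 /= cardsU1.
  have n1 : x0 \notin S by apply/negP => /(subsetP s1); rewrite !inE eqxx.
  by rewrite n1 cS add1n prednK.
pose pv (A : {set 'I_n}) : {ffun 'I_t * 'I_b -> bool} :=
  [ffun ib => odd #|A :&: Qslice (Q ib.1) ib.2|].
case: (boolP [exists A : {set 'I_n}, exists B : {set 'I_n},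
   [&& A \in Fam, B \in Fam, A != B, pv A == pv B & (q %| #|A :&: B|)%N]]).
  case/existsP => A /existsP[B] /and5P[AF BF nAB pAB dAB].
  move: AF BF; rewrite !inE => /andP[xA /eqP cA] /andP[xB /eqP cB].
  exists A, B; split => //; split => //; split.
    have m0 : (0 < #|A :&: B|)%N by apply/card_gt0P; exists x0; rewrite inE xA xB.
    have mle : (#|A :&: B| <= k)%N by rewrite -cA subset_leq_card ?subsetIl.
    have mne : #|A :&: B| != k.
      apply/negP => /eqP mk; move/negP: nAB; apply.
      have eA : A :&: B = A by apply/eqP; rewrite eqEcard subsetIl cA mk leqnn.
      have eB : A :&: B = B by apply/eqP; rewrite eqEcard subsetIr cB mk leqnn.
      by rewrite -eA -[X in _ == X]eB.
    case/dvdnP: dAB m0 mle mne => c ->; rewrite Ek2 => m0 mle mne.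
    have c1 : c = 1%N.
      move/eqP: mne => mne; nia.
    by rewrite c1 mul1n.
  move=> i beta.
  have := congr1 (fun f : {ffun 'I_t * 'I_b -> bool} => f (i, beta)) (eqP pAB).
  by rewrite /pv !ffunE.
move=> Hno; exfalso.
set P := [set S : {set 'I_n} | (#|S| < q)%N].
have Hcls v : (#|[set A in Fam | pv A == v]| <= #|P|)%N.
  rewrite /P qE; apply: (FW pp).
    move=> A; rewrite !inE => /andP[/andP[_ /eqP ->] _].
    by rewrite -qE Ek2 dvdn_mull.
  move=> A B; rewrite !inE => /andP[AF /eqP pA] /andP[BF /eqP pB] nAB.
  apply/negP => dAB; move/negP: Hno; apply.
  apply/existsP; exists A; apply/existsP; exists B.
  by rewrite !inE AF BF nAB pA pB eqxx qE dAB.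
have cF : (#|Fam| <= 2 ^ (t * b) * #|P|)%N.
  rewrite -sum1_card (partition_big pv xpredT) //=.
  apply: (@leq_trans (\sum_(v : {ffun 'I_t * 'I_b -> bool}) #|P|)).
    apply: leq_sum => v _.
    apply: leq_trans (Hcls v); rewrite sum1_card.
    apply: eq_leq; apply: eq_card => A. rewrite [in RHS]inE. done.
  by rewrite sum_nat_const card_ffun card_bool card_prod !card_ord mulnC.
have := leq_ltn_trans cF (leq_trans _ cardFam).
rewrite /P card_small; move=> /(_ Hnum).
by rewrite ltnn.
Qed.
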